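(* Let $A$ be a ring and $B$ an $A$-algebra. Suppose that there is an injective flat ring homomorphism $A\to A'$ such that $B\otimes_A A'$ is flat over $A'$. Then the torsionless quotient $B^{tl}$ equals the image of the natural map $B\to B\otimes_A A'$, i.e. $\bigcap_g\ker(g)=\ker(B\to B\otimes_AA')$.
   Context: For an $A$-algebra $B$, its torsionless quotient is $B^{tl}=B/\bigcap_g\ker(g)$, where $g$ runs over all $A$-algebra homomorphisms $g\colon B\to P$ with $P$ a flat $A$-algebra. *)

(* Defs.v *)
From HB Require Import structures.
From mathcomp Require Import all_boot all_order all_algebra.
Set Implicit Arguments. Unset Strict Implicit. Unset Printing Implicit Defensive.
Import GRing.Theory.
Local Open Scope ring_scope.

(* Restriction of scalars: a ring S viewed as an R-module through a ring
   homomorphism f : R -> S, with r *: s := f r * s. *)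
Definition restr (R S : comPzRingType) (f : {rmorphism R -> S}) : Type := S.

Section Restr.
Variables (R S : comPzRingType) (f : {rmorphism R -> S}).
HB.instance Definition _ := GRing.Zmodule.on (restr f).
Definition restr_scale (r : R) (s : restr f) : restr f := (f r * (s : S) : S).
Fact restr_scalerA a b v :
  restr_scale a (restr_scale b v) = restr_scale (a * b) v.
Proof. by rewrite /restr_scale rmorphM mulrA. Qed.
Fact restr_scale1r : left_id 1 restr_scale.
Proof. by move=> v; rewrite /restr_scale rmorph1 mul1r. Qed.
Fact restr_scalerDr : right_distributive restr_scale +%R.
Proof. by move=> a u v; rewrite /restr_scale mulrDr. Qed.
Fact restr_scalerDl v : {morph restr_scale^~ v : a b / a + b}.
Proof. by move=> a b; rewrite /restr_scale rmorphD mulrDl. Qed.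
HB.instance Definition _ := GRing.Zmodule_isLmodule.Build R (restr f)
  restr_scalerA restr_scale1r restr_scalerDr restr_scalerDl.
End Restr.

Definition bilinear_map (R : comPzRingType) (M N P : lmodType R)
  (t : M -> N -> P) : Prop :=
  (forall n, linear (fun m => t m n)) /\ (forall m, linear (t m)).

Definition is_tensor (R : comPzRingType) (M N T : lmodType R)
  (t : M -> N -> T) : Prop :=
  bilinear_map t /\
  forall (P : lmodType R) (f : M -> N -> P), bilinear_map f ->
    exists h : {linear T -> P},
      (forall m n, h (t m n) = f m n) /\
      (forall h' : {linear T -> P}, (forall m n, h' (t m n) = f m n) ->
         forall x, h' x = h x).

Definition flat (R : comPzRingType) (M : lmodType R) : Prop :=
  forall (N N' : lmodType R) (f : {linear N -> N'}), injective f ->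
  forall (T : lmodType R) (t : M -> N -> T) (T' : lmodType R)
         (t' : M -> N' -> T'),
    is_tensor t -> is_tensor t' ->
    forall h : {linear T -> T'}, (forall m n, h (t m n) = t' m (f n)) ->
      injective h.

(* Main.v *)
Require Import Defs.
From HB Require Import structures.
From mathcomp Require Import all_boot all_order all_algebra.
From mathcomp Require Import boolp.
Set Implicit Arguments. Unset Strict Implicit. Unset Printing Implicit Defensive.
Import GRing.Theory.
Local Open Scope ring_scope.

Section LinFacts.
Variables (R : comPzRingType) (U V : lmodType R) (g : U -> V) (lg : linear g).
Lemma linD u v : g (u + v) = g u + g v.
Proof. by have := lg 1 u v; rewrite !scale1r. Qed.
Lemma lin0 : g 0 = 0.
Proof. by have := linD 0 0; rewrite addr0 => /(congr1 (fun z => z - g 0)); rewrite subrr addrK. Qed.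
Lemma linN u : g (- u) = - g u.
Proof. by apply/eqP; rewrite -addr_eq0 -linD addrC subrr lin0. Qed.
Lemma linZ a u : g (a *: u) = a *: g u.
Proof. by have := lg a u 0; rewrite !addr0 lin0 addr0. Qed.
End LinFacts.

Section Tensor.
Variables (R : comPzRingType) (M N : lmodType R).

Definition sumf (P : lmodType R) (f : M -> N -> P) (s : seq (M * N)) : P :=
  \sum_(p <- s) f p.1 p.2.

Definition trel (s t : seq (M * N)) : Prop :=
  forall (P : lmodType R) (f : M -> N -> P), bilinear_map f -> sumf f s = sumf f t.

Lemma trel_refl s : trel s s. Proof. by []. Qed.
Lemma trel_sym s t : trel s t -> trel t s. Proof. by move=> h P f hf; rewrite h. Qed.
Lemma trel_trans s t u : trel s t -> trel t u -> trel s u.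
Proof. by move=> h1 h2 P f hf; rewrite h1 ?h2. Qed.

Definition canon (s : seq (M * N)) : seq (M * N) :=
  xchoose (ex_intro (fun t => `[< trel s t >]) s (asboolT (trel_refl s))).

Lemma canonP s : trel s (canon s).
Proof. exact/asboolP/(xchooseP (ex_intro (fun t => `[< trel s t >]) s (asboolT (trel_refl s)))). Qed.

Lemma canon_eq s t : trel s t -> canon s = canon t.
Proof.
move=> h; apply: eq_xchoose => u; apply/asboolP/asboolP.
  by move=> h'; apply: trel_trans (trel_sym h) h'.
by move=> h'; apply: trel_trans h h'.
Qed.

Definition Tens := {s : seq (M * N) | canon s == s}.
HB.instance Definition _ := [Choice of Tens by <:].

Lemma canonK s : canon (canon s) == canon s.
Proof. by apply/eqP/canon_eq/trel_sym/canonP. Qed.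

Definition tpi (s : seq (M * N)) : Tens := exist _ (canon s) (canonK s).

Definition ev (P : lmodType R) (f : M -> N -> P) (x : Tens) : P := sumf f (sval x).


Lemma ev_pi (P : lmodType R) (f : M -> N -> P) s : bilinear_map f -> ev f (tpi s) = sumf f s.
Proof. by move=> hf; rewrite /ev /=; symmetry; apply: canonP. Qed.

Lemma tpi_sval x : tpi (sval x) = x.
Proof. by case: x => s hs; apply: val_inj => /=; apply/eqP. Qed.

Lemma tens_eqP x y :
  (forall (P : lmodType R) (f : M -> N -> P), bilinear_map f -> ev f x = ev f y) -> x = y.
Proof.
move=> h; rewrite -(tpi_sval x) -(tpi_sval y); apply: val_inj => /=.
by apply: canon_eq => P f hf; apply: h.
Qed.

Definition addT (x y : Tens) := tpi (sval x ++ sval y).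
Definition zeroT := tpi [::].
Definition oppT (x : Tens) := tpi (map (fun p => (- p.1, p.2)) (sval x)).
Definition scaleT (r : R) (x : Tens) := tpi (map (fun p => (r *: p.1, p.2)) (sval x)).

Section Ev.
Variables (P : lmodType R) (f : M -> N -> P) (hf : bilinear_map f).
Lemma ev_add x y : ev f (addT x y) = ev f x + ev f y.
Proof. by rewrite /addT ev_pi // /sumf big_cat. Qed.
Lemma ev_zero : ev f zeroT = 0.
Proof. by rewrite /zeroT ev_pi // /sumf big_nil. Qed.
Lemma ev_opp x : ev f (oppT x) = - ev f x.
Proof.
rewrite /oppT ev_pi // /sumf big_map /ev /sumf -sumrN; apply: eq_bigr => p _ /=.
by rewrite (linN (hf.1 _)).
Qed.
Lemma ev_scale r x : ev f (scaleT r x) = r *: ev f x.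
Proof.
rewrite /scaleT ev_pi // /sumf big_map /ev /sumf scaler_sumr; apply: eq_bigr => p _ /=.
by rewrite (linZ (hf.1 _)).
Qed.
End Ev.

Fact addTA : associative addT.
Proof. by move=> x y z; apply: tens_eqP => P f hf; rewrite !ev_add // addrA. Qed.
Fact addTC : commutative addT.
Proof. by move=> x y; apply: tens_eqP => P f hf; rewrite !ev_add // addrC. Qed.
Fact add0T : left_id zeroT addT.
Proof. by move=> x; apply: tens_eqP => P f hf; rewrite !ev_add // ev_zero // add0r. Qed.
Fact addNT : left_inverse zeroT oppT addT.
Proof. by move=> x; apply: tens_eqP => P f hf; rewrite !ev_add // ev_opp // ev_zero // addNr. Qed.
HB.instance Definition _ := GRing.isZmodule.Build Tens addTA addTC add0T addNT.

Fact scaleTA a b v : scaleT a (scaleT b v) = scaleT (a * b) v.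
Proof. by apply: tens_eqP => P f hf; rewrite !ev_scale // scalerA. Qed.
Fact scale1T : left_id 1 scaleT.
Proof. by move=> x; apply: tens_eqP => P f hf; rewrite !ev_scale // scale1r. Qed.
Fact scaleTDr : right_distributive scaleT +%R.
Proof. by move=> a x y; apply: tens_eqP => P f hf; rewrite !(ev_scale, ev_add) // scalerDr. Qed.
Fact scaleTDl v : {morph scaleT^~ v : a b / a + b}.
Proof. by move=> a b; apply: tens_eqP => P f hf; rewrite !(ev_scale, ev_add) // scalerDl. Qed.
HB.instance Definition _ := GRing.Zmodule_isLmodule.Build R Tens
  scaleTA scale1T scaleTDr scaleTDl.

Definition tt (m : M) (n : N) : Tens := tpi [:: (m, n)].

Section Ev2.
Variables (P : lmodType R) (f : M -> N -> P) (hf : bilinear_map f).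
Lemma evD x y : ev f (x + y) = ev f x + ev f y. Proof. exact: ev_add. Qed.
Lemma evZ r x : ev f (r *: x) = r *: ev f x. Proof. exact: ev_scale. Qed.
Lemma ev0 : ev f 0 = 0. Proof. exact: ev_zero. Qed.
Lemma ev_tt m n : ev f (tt m n) = f m n.
Proof. by rewrite /tt ev_pi // /sumf big_seq1. Qed.
Lemma ev_linear : linear (ev f).
Proof. by move=> a x y; rewrite evD evZ. Qed.
Lemma ev_sum (s : seq (M * N)) : ev f (\sum_(p <- s) tt p.1 p.2) = sumf f s.
Proof.
rewrite /sumf; elim: s => [|p s IH]; first by rewrite !big_nil ev0.
by rewrite !big_cons evD ev_tt IH.
Qed.
End Ev2.

Lemma tt_bilinear : bilinear_map tt.
Proof.
split=> [n|m] a u v; apply: tens_eqP => P f hf;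
  rewrite evD // evZ // !ev_tt //; [exact: hf.1 | exact: hf.2].
Qed.

Lemma tens_span x : x = \sum_(p <- sval x) tt p.1 p.2.
Proof. by apply: tens_eqP => P f hf; rewrite ev_sum. Qed.

Lemma tens_ext (V : zmodType) (g h : Tens -> V) :
  {morph g : x y / x + y} -> {morph h : x y / x + y} ->
  (forall m n, g (tt m n) = h (tt m n)) -> g =1 h.
Proof.
move=> gD hD e x; rewrite (tens_span x).
have g0 : g 0 = 0 by have := gD 0 0; rewrite addr0 => /(congr1 (fun z => z - g 0)); rewrite subrr addrK.
have h0 : h 0 = 0 by have := hD 0 0; rewrite addr0 => /(congr1 (fun z => z - h 0)); rewrite subrr addrK.
elim: (sval x) => [|p s IH]; first by rewrite big_nil g0 h0.
by rewrite big_cons gD hD e IH.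
Qed.

Definition tlift (P : lmodType R) (f : M -> N -> P) (hf : bilinear_map f) : Tens -> P := ev f.
Section Lift.
Variables (P : lmodType R) (f : M -> N -> P) (hf : bilinear_map f).
HB.instance Definition _ := GRing.isLinear.Build R Tens P *:%R (tlift hf) (ev_linear hf).
Lemma tlift_tt m n : tlift hf (tt m n) = f m n. Proof. exact: ev_tt. Qed.
Lemma tliftD x y : tlift hf (x + y) = tlift hf x + tlift hf y. Proof. exact: evD. Qed.
End Lift.

Lemma tt_tensor : is_tensor tt.
Proof.
split; first exact: tt_bilinear.
move=> P f hf; exists (tlift hf); split; first exact: tlift_tt.
move=> h' eh x; apply: (tens_ext (g := h') (h := tlift hf)) => //.
- by move=> ??; rewrite raddfD.
- by move=> ??; rewrite tliftD.
- by move=> m n; rewrite eh tlift_tt.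
Qed.

End Tensor.


Lemma restrZ (R S : comPzRingType) (f : {rmorphism R -> S}) (r : R) (m : restr f) :
  r *: m = (f r * (m : S) : S) :> S.
Proof. by []. Qed.

Lemma ttf_bilinear (R : comPzRingType) (M N N' : lmodType R) (f : N -> N') (lf : linear f) :
  bilinear_map (fun (m : M) n => tt m (f n)).
Proof.
split=> [n|m] a u v /=; first exact: (tt_bilinear M N').1.
by rewrite lf; exact: (tt_bilinear M N').2.
Qed.

Section TensS.
Variables (R S : comPzRingType) (M N : lmodType R) (act : S -> M -> M).
Hypotheses (act_lin : forall s, linear (act s))
  (act_mul : forall s1 s2 m, act s1 (act s2 m) = act (s1 * s2) m)
  (act_1 : forall m, act 1 m = m)
  (act_addl : forall s1 s2 m, act (s1 + s2) m = act s1 m + act s2 m).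

Lemma actT_bil s : bilinear_map (fun m n => tt (N:=N) (act s m) n).
Proof.
split=> [n|m] a u v /=; last exact: (tt_bilinear M N).2.
by rewrite act_lin; exact: (tt_bilinear M N).1.
Qed.

Definition actT s : Tens M N -> Tens M N := tlift (actT_bil s).
Lemma actT_tt s m n : actT s (tt m n) = tt (act s m) n. Proof. exact: tlift_tt. Qed.
Lemma actTD s x y : actT s (x + y) = actT s x + actT s y. Proof. exact: tliftD. Qed.

Definition TensS : Type := (fun _ _ _ _ => Tens M N) act_lin act_mul act_1 act_addl.
HB.instance Definition _ := GRing.Zmodule.on TensS.

Fact actTA a b v : actT a (actT b v) = actT (a * b) v.
Proof.
apply: (tens_ext (g := fun v => actT a (actT b v))) => //.
- by move=> x y; rewrite !actTD.
- by move=> x y; rewrite actTD.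
- by move=> m n; rewrite !actT_tt act_mul.
Qed.
Fact actT1 : left_id 1 actT.
Proof.
move=> x; apply: (tens_ext (g := actT 1) (h := id)) => //.
- by move=> ??; rewrite actTD.
- by move=> m n; rewrite actT_tt act_1.
Qed.
Fact actTDr : right_distributive actT +%R.
Proof. by move=> a x y; rewrite actTD. Qed.
Fact actTDl v : {morph actT^~ v : a b / a + b}.
Proof.
move=> a b; apply: (tens_ext (g := fun v => actT (a + b) v) (h := fun v => actT a v + actT b v)) => //.
- by move=> ??; rewrite actTD.
- by move=> x y; rewrite !actTD addrACA.
- move=> m n; rewrite !actT_tt act_addl.
  by have := (tt_bilinear M N).1 n 1 (act a m) (act b m); rewrite !scale1r.
Qed.
HB.instance Definition _ := GRing.Zmodule_isLmodule.Build S TensS actTA actT1 actTDr actTDl.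

Lemma TensS_scale s (x : TensS) : s *: x = actT s x. Proof. by []. Qed.

Variables (phi : {rmorphism R -> S}).
Hypothesis act_phi : forall r m, act (phi r) m = r *: m.
Lemma actT_phi r (x : Tens M N) : actT (phi r) x = r *: x.
Proof.
apply: (tens_ext (g := actT (phi r)) (h := fun x => r *: x)) => //.
- by move=> ??; rewrite actTD.
- by move=> ??; rewrite scalerDr.
- move=> m n; rewrite actT_tt act_phi.
  exact: (linZ ((tt_bilinear M N).1 n)).
Qed.
End TensS.

Section Rescal.
Variables (R S : comPzRingType) (phi : {rmorphism R -> S}) (V : lmodType S).
Definition rescal : Type := (fun _ => V) phi.
HB.instance Definition _ := GRing.Zmodule.on rescal.
Definition rs_scale (r : R) (v : rescal) : rescal := (phi r *: (v : V) : V).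
Fact rs_scalerA a b v : rs_scale a (rs_scale b v) = rs_scale (a * b) v.
Proof. by rewrite /rs_scale rmorphM scalerA. Qed.
Fact rs_scale1r : left_id 1 rs_scale.
Proof. by move=> v; rewrite /rs_scale rmorph1 scale1r. Qed.
Fact rs_scalerDr : right_distributive rs_scale +%R.
Proof. by move=> a u v; rewrite /rs_scale scalerDr. Qed.
Fact rs_scalerDl v : {morph rs_scale^~ v : a b / a + b}.
Proof. by move=> a b; rewrite /rs_scale rmorphD scalerDl. Qed.
HB.instance Definition _ := GRing.Zmodule_isLmodule.Build R rescal
  rs_scalerA rs_scale1r rs_scalerDr rs_scalerDl.
Lemma rescalZ r (v : rescal) : r *: v = (phi r *: (v : V) : V). Proof. by []. Qed.
End Rescal.

Section FlatRaw.
Variables (R : comPzRingType) (M N N' : lmodType R) (f : N -> N') (lf : linear f).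
Definition fraw : N -> N' := f.
HB.instance Definition _ := GRing.isLinear.Build R N N' *:%R fraw lf.
Lemma flat_raw : flat M -> injective f ->
  injective (tlift (@ttf_bilinear _ M _ _ _ lf)).
Proof.
move=> fl finj; apply: (fl N N' fraw finj _ _ _ _ (tt_tensor M N) (tt_tensor M N')).
by move=> m n; apply: tlift_tt.
Qed.
End FlatRaw.

Lemma tensor_ext (R : comPzRingType) (M N X : lmodType R) (t : M -> N -> X)
  (tX : is_tensor t) (P : lmodType R) (h1 h2 : {linear X -> P}) :
  (forall m n, h1 (t m n) = h2 (t m n)) -> h1 =1 h2.
Proof.
move=> e.
have bil : bilinear_map (fun m n => h1 (t m n)).
  split=> [n|m] a u v /=.
    by have := tX.1.1 n a u v => /= ->; rewrite linearP.
  by have := tX.1.2 m a u v => /= ->; rewrite linearP.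
have [h [_ hu]] := tX.2 P _ bil.
move=> x; rewrite (hu h1) // (hu h2) //.
Qed.

Lemma flat_of_gen (R : comPzRingType) (M : lmodType R) :
  (forall (N N' : lmodType R) (f : N -> N') (lf : linear f), injective f ->
     injective (tlift (@ttf_bilinear _ M _ _ _ lf))) -> flat M.
Proof.
move=> G N N' f finj X t X' t' tX tX' h ht x y hxy.
have [u [ut _]] := tX.2 _ _ (tt_bilinear M N).
have [u' [ut' _]] := tX'.2 _ _ (tt_bilinear M N').
pose v := tlift tX.1.
have vu : forall z, v (u z) = z.
  move=> z; apply: (tensor_ext tX (h1 := v \o u) (h2 := idfun)) => m n /=.
  by rewrite ut tlift_tt.
have lf : linear f by move=> a ??; rewrite linearP.
have com : forall z, u' (h z) = tlift (@ttf_bilinear _ M _ _ _ lf) (u z).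
  move=> z; apply: (tensor_ext tX (h1 := u' \o h) (h2 := tlift (@ttf_bilinear _ M _ _ _ lf) \o u)) => m n /=.
  by rewrite ht ut' ut tlift_tt.
rewrite -(vu x) -(vu y); congr v; apply: (G _ _ _ lf finj).
by rewrite -!com hxy.
Qed.

Lemma kernel_sub (A A' B T P : comPzRingType)
  (iA' : {rmorphism A -> A'}) (iB : {rmorphism A -> B})
  (iA'_inj : injective iA')
  (jB : {rmorphism B -> T}) (jA' : {rmorphism A' -> T})
  (T_tensor : is_tensor (M := restr iB) (N := restr iA')
                        (T := restr (jA' \o iA'))
                        (fun b a' => jB b * jA' a'))
  (iP : {rmorphism A -> P}) (fP : flat (restr iP))
  (g : {rmorphism B -> P}) (hg : forall a, g (iB a) = iP a) (b : B) :
  jB b = 0 -> g b = 0.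
Proof.
move=> jb0.
pose N0 := restr (@idfun A).
have lf : linear (iA' : N0 -> restr iA').
  by move=> a u v; rewrite /= rmorphD !restrZ rmorphM.
have Finj := flat_raw (lf:=lf) fP iA'_inj.
have bil : bilinear_map (fun (b0 : restr iB) (a' : restr iA') => tt (g b0 : restr iP) a').
  split=> [n|m] a u v /=; last exact: (tt_bilinear (restr iP) (restr iA')).2.
  have -> : g (a *: u + v) = (a *: (g u : restr iP) + g v : restr iP).
    by rewrite !restrZ rmorphD rmorphM hg.
  exact: (tt_bilinear (restr iP) (restr iA')).1.
have [k [kt _]] := T_tensor.2 _ _ bil.
have e1 : tt (g b : restr iP) (1 : restr iA') = 0.
  by rewrite -kt jb0 mul0r linear0.
have e2 : tt (g b : restr iP) (1 : N0) = 0.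
  apply: Finj; rewrite linear0.
  by rewrite (tlift_tt (@ttf_bilinear _ (restr iP) _ _ _ lf)) /= rmorph1.
have bil2 : bilinear_map (fun (p : restr iP) (a : N0) => (a *: p : restr iP)).
  split=> [n|m] a u v /=; first by rewrite scalerDr !scalerA mulrC.
  by rewrite scalerDl -scalerA.
have := tlift_tt bil2 (g b : restr iP) (1 : N0).
by rewrite e2 linear0 scale1r => ->.
Qed.

Section Trans.
Variables (R S U : comPzRingType) (phi : {rmorphism R -> S}) (psi : {rmorphism S -> U}).
Hypotheses (fphi : flat (restr phi)) (fpsi : flat (restr psi)).

Local Notation M := (restr (psi \o phi)).

Definition actQ (s : S) (m : restr phi) : restr phi := (s * (m : S) : S).
Lemma actQ_lin s : linear (actQ s).
Proof. by move=> a u v; rewrite /actQ /= !restrZ mulrDr mulrCA. Qed.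
Lemma actQ_mul s1 s2 m : actQ s1 (actQ s2 m) = actQ (s1 * s2) m.
Proof. by rewrite /actQ mulrA. Qed.
Lemma actQ_1 m : actQ 1 m = m. Proof. by rewrite /actQ mul1r. Qed.
Lemma actQ_addl s1 s2 m : actQ (s1 + s2) m = actQ s1 m + actQ s2 m.
Proof. by rewrite /actQ mulrDl. Qed.
Lemma actQ_phi r m : actQ (phi r) m = r *: m. Proof. by []. Qed.

Definition actZ (s : S) (m : M) : M := (psi s * (m : U) : U).
Lemma actZ_lin s : linear (actZ s).
Proof. by move=> a u v; rewrite /actZ /= !restrZ mulrDr mulrCA. Qed.
Lemma actZ_mul s1 s2 m : actZ s1 (actZ s2 m) = actZ (s1 * s2) m.
Proof. by rewrite /actZ rmorphM mulrA. Qed.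
Lemma actZ_1 m : actZ 1 m = m. Proof. by rewrite /actZ rmorph1 mul1r. Qed.
Lemma actZ_addl s1 s2 m : actZ (s1 + s2) m = actZ s1 m + actZ s2 m.
Proof. by rewrite /actZ rmorphD mulrDl. Qed.

Section Gen.
Variable (N0 : lmodType R).
Definition QS0 := TensS N0 actQ_lin actQ_mul actQ_1 actQ_addl.
Definition ZS0 := TensS N0 actZ_lin actZ_mul actZ_1 actZ_addl.
Definition Y0 := Tens (restr psi) QS0.

Lemma phi0_bil : bilinear_map (fun (m : M) (n : N0) =>
   (tt (m : restr psi) (tt (1 : restr phi) n : QS0) : rescal phi Y0)).
Proof.
split=> [n|m] a u v /=.
  exact: ((tt_bilinear (restr psi) QS0).1 _ (phi a) u v).
have -> := (tt_bilinear (restr phi) N0).2 (1 : restr phi) a u v.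
rewrite -(actT_phi (N:=N0) actQ_lin actQ_phi).
exact: ((tt_bilinear (restr psi) QS0).2 m (phi a) _ _).
Qed.
Definition phi0 : Tens M N0 -> rescal phi Y0 := tlift phi0_bil.

Lemma rho_bil (m : restr psi) : bilinear_map (fun (s : restr phi) (n : N0) => tt (psi s * m : M) n).
Proof.
split=> [n|n] a u v /=; last exact: (tt_bilinear M N0).2.
have e : psi (a *: u + v) * m = psi (phi a) * (psi u * m) + psi v * m :> U.
  by rewrite restrZ rmorphD rmorphM mulrDl mulrA.
rewrite e; exact: ((tt_bilinear M N0).1 n a _ _).
Qed.
Definition rho0 (m : restr psi) : Tens (restr phi) N0 -> Tens M N0 := tlift (rho_bil m).

Lemma rho_act m s q : rho0 m (actT actQ_lin s q) = actT actZ_lin s (rho0 m q).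
Proof.
apply: (tens_ext (g := fun q => rho0 m (actT actQ_lin s q))
                 (h := fun q => actT actZ_lin s (rho0 m q))).
- by move=> x y; rewrite actTD /rho0 tliftD.
- by move=> x y; rewrite /rho0 tliftD actTD.
move=> s0 n; rewrite actT_tt /rho0 !tlift_tt actT_tt /actQ /actZ.
by rewrite rmorphM mulrA.
Qed.

Lemma rho_lin_m s (m m' : restr psi) q :
  rho0 (s *: m + m') q = actT actZ_lin s (rho0 m q) + rho0 m' q.
Proof.
apply: (tens_ext (g := fun q => rho0 (s *: m + m') q)
                 (h := fun q => actT actZ_lin s (rho0 m q) + rho0 m' q)).
- by move=> x y; rewrite /rho0 tliftD.
- by move=> x y; rewrite /rho0 !tliftD actTD addrACA.
move=> s0 n; rewrite /rho0 !tlift_tt actT_tt /actZ.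
have e : psi s0 * (s *: m + m') = psi s * (psi s0 * m) + psi s0 * m' :> U.
  by rewrite restrZ mulrDr mulrCA.
rewrite e; exact: (linD ((tt_bilinear M N0).1 n)).
Qed.

Lemma psi0_bil : bilinear_map (fun (m : restr psi) (q : QS0) => (rho0 m q : ZS0)).
Proof.
split=> [q|m] a u v /=; first exact: rho_lin_m.
by rewrite /rho0 tliftD -/(rho0 _) rho_act.
Qed.
Definition psi0 : Y0 -> ZS0 := tlift psi0_bil.

Lemma psi_phi z : psi0 (phi0 z) = z.
Proof.
apply: (tens_ext (g := fun z => psi0 (phi0 z)) (h := id)) => //.
- by move=> x y; rewrite /phi0 tliftD /psi0 tliftD.
move=> m n; rewrite /phi0 tlift_tt /psi0 tlift_tt /rho0 tlift_tt.
by rewrite rmorph1 mul1r.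
Qed.
End Gen.

Variables (N N' : lmodType R) (f : N -> N') (lf : linear f) (finj : injective f).

Definition F0 : Tens (restr phi) N -> Tens (restr phi) N' :=
  tlift (@ttf_bilinear _ (restr phi) _ _ _ lf).
Lemma F0inj : injective F0. Proof. exact: (flat_raw (lf := lf) fphi finj). Qed.
Lemma F0act s x : F0 (actT actQ_lin s x) = actT actQ_lin s (F0 x).
Proof.
apply: (tens_ext (g := fun x => F0 (actT actQ_lin s x))
                 (h := fun x => actT actQ_lin s (F0 x))).
- by move=> x1 y; rewrite actTD /F0 tliftD.
- by move=> x1 y; rewrite /F0 tliftD actTD.
by move=> m n; rewrite actT_tt /F0 !tlift_tt actT_tt.
Qed.
Lemma F0S_lin : linear (F0 : QS0 N -> QS0 N').
Proof. by move=> a x y; rewrite /F0 tliftD; congr (_ + _); exact: F0act a x. Qed.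

Definition H : Y0 N -> Y0 N' := tlift (@ttf_bilinear _ (restr psi) _ _ _ F0S_lin).
Lemma Hinj : injective H. Proof. exact: (flat_raw (lf := F0S_lin) fpsi F0inj). Qed.

Lemma flat_trans_gen : injective (tlift (@ttf_bilinear _ M _ _ _ lf)).
Proof.
have com : forall z, H (phi0 z) = phi0 (tlift (@ttf_bilinear _ M _ _ _ lf) z).
  apply: tens_ext.
  - by move=> x y; rewrite /phi0 tliftD /H tliftD.
  - by move=> x y; rewrite tliftD /phi0 tliftD.
  move=> m n; rewrite /phi0 !tlift_tt /H tlift_tt /F0 tlift_tt.
  by [].
move=> z1 z2 e; rewrite -(psi_phi z1) -(psi_phi z2); congr psi0.
by apply: Hinj; rewrite !com e.
Qed.
End Trans.

Lemma flat_trans (R S U : comPzRingType) (phi : {rmorphism R -> S}) (psi : {rmorphism S -> U}) :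
  flat (restr phi) -> flat (restr psi) -> flat (restr (psi \o phi)).
Proof.
move=> fphi fpsi; apply: flat_of_gen => N N' f lf finj.
exact: flat_trans_gen.
Qed.

Theorem proposition5p4
  (A A' B T : comPzRingType)
  (iA' : {rmorphism A -> A'}) (iB : {rmorphism A -> B})
  (iA'_inj : injective iA') (A'_flat : flat (restr iA'))
  (jB : {rmorphism B -> T}) (jA' : {rmorphism A' -> T})
  (j_comm : forall a, jB (iB a) = jA' (iA' a))
  (T_tensor : is_tensor (M := restr iB) (N := restr iA')
                        (T := restr (jA' \o iA'))
                        (fun b a' => jB b * jA' a'))
  (T_flat : flat (restr jA')) :
  forall b : B,
    (forall (P : comPzRingType) (iP : {rmorphism A -> P}),
       flat (restr iP) ->
       forall g : {rmorphism B -> P}, (forall a, g (iB a) = iP a) -> g b = 0)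
    <-> jB b = 0.
Proof.
move=> b; split.
  by move=> h; apply: (h T (jA' \o iA') (flat_trans A'_flat T_flat) jB).
by move=> jb0 P iP fP g hg; apply: (kernel_sub iA'_inj T_tensor fP hg jb0).
Qed.
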